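(* Let $M\in\mathbb{R}^{n\times n}$ be symmetric positive definite, let $\delta_i,\delta_{i-1}>0$, let $\theta_{i-1},\theta_{i-2}\in\mathbb{R}^n$ and a control value $u$ be fixed, and let $\bar P(\cdot,u):\mathbb{R}^n\to\mathbb{R}$ be $L$-curvature bounded for some $L>0$. Define $$\bar E_i(\theta_i)=\frac{1}{2\delta_i^2}\Big\|\theta_i-\big(1+\tfrac{\delta_i}{\delta_{i-1}}\big)\theta_{i-1}+\tfrac{\delta_i}{\delta_{i-1}}\theta_{i-2}\Big\|_M^2+\bar P(\theta_i,u).$$ If $\delta_i<\sqrt{\sigma_{\min}(M)/L}$, then $\bar E_i$ is strongly convex in $\theta_i$ and its minimizer over $\theta_i\in\mathbb{R}^n$ is unique.
   Context: $\|x\|_M^2=x^TMx$; $\sigma_{\min}(M)$ denotes the smallest singular value of $M$. A function $\phi:\mathbb{R}^n\to\mathbb{R}$ is $L$-weakly convex if $\phi(x)+\frac{L}{2}\|x\|^2$ is convex; it is $L$-gradient continuous if it is differentiable and $\|\nabla\phi(x)-\nabla\phi(x')\|\le L\|x-x'\|$ for all $x,x'$; it is $L$-curvature bounded if both properties hold. *)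

(* Defs.v *)
From HB Require Import structures.
From mathcomp Require Import all_boot all_order all_algebra.
From mathcomp Require Import all_classical all_reals all_analysis.
Set Implicit Arguments. Unset Strict Implicit. Unset Printing Implicit Defensive.
Import Order.TTheory GRing.Theory Num.Theory.
Import numFieldNormedType.Exports.
Local Open Scope classical_set_scope.
Local Open Scope ring_scope.

Section Defs.
Variables (R : realType) (n : nat).

Definition dotv (x y : 'cV[R]_n) : R := \sum_(i < n) x i 0 * y i 0.
Definition enorm (x : 'cV[R]_n) : R := Num.sqrt (dotv x x).

Definition mnorm2 (M : 'M[R]_n) (x : 'cV[R]_n) : R := (x^T *m M *m x) 0 0.

Definition sym_pos_def (M : 'M[R]_n) : Prop :=
  M^T = M /\ forall x : 'cV[R]_n, x != 0 -> 0 < mnorm2 M x.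

Definition sigma_min (M : 'M[R]_n) : R :=
  inf [set enorm (M *m x) | x in [set x : 'cV[R]_n | enorm x = 1]].

Definition convex_fun (f : 'cV[R]_n -> R) : Prop :=
  forall (x y : 'cV[R]_n) (t : R), 0 <= t <= 1 ->
    f ((1 - t) *: x + t *: y) <= (1 - t) * f x + t * f y.

Definition weakly_convex (L : R) (f : 'cV[R]_n -> R) : Prop :=
  convex_fun (fun x => f x + L / 2 * enorm x ^+ 2).

Definition strongly_convex (f : 'cV[R]_n -> R) : Prop :=
  exists mu : R, 0 < mu /\ convex_fun (fun x => f x - mu / 2 * enorm x ^+ 2).

Definition gradient (f : 'cV[R]_n -> R) (x : 'cV[R]_n) : 'cV[R]_n :=
  \col_i ('d f x (delta_mx i 0)).

Definition gradient_continuous (L : R) (f : 'cV[R]_n -> R) : Prop :=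
  (forall x, differentiable f x) /\
  forall x y : 'cV[R]_n, enorm (gradient f x - gradient f y) <= L * enorm (x - y).

Definition curvature_bounded (L : R) (f : 'cV[R]_n -> R) : Prop :=
  weakly_convex L f /\ gradient_continuous L f.

End Defs.

(* Main.v *)
Require Import Defs.
From HB Require Import structures.
From mathcomp Require Import all_boot all_order all_algebra.
From mathcomp Require Import all_classical all_reals all_analysis.
Import Order.TTheory GRing.Theory Num.Theory.
Import numFieldNormedType.Exports.
From mathcomp Require Import ring lra.
Local Open Scope ring_scope.


Module MA.
Set Implicit Arguments. Unset Strict Implicit.
Local Open Scope ring_scope.
Local Open Scope classical_set_scope.

Section Alg.
Variables (R : realType) (n : nat).
Implicit Types (x y z : 'cV[R]_n) (M : 'M[R]_n).

Definition bf M x y : R := (x^T *m M *m y) 0 0.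

Lemma bfDl M x y z : bf M (x + y) z = bf M x z + bf M y z.
Proof. by rewrite /bf linearD /= !mulmxDl mxE. Qed.
Lemma bfDr M x y z : bf M z (x + y) = bf M z x + bf M z y.
Proof. by rewrite /bf mulmxDr mxE. Qed.
Lemma bfZl M k x y : bf M (k *: x) y = k * bf M x y.
Proof. by rewrite /bf linearZ /= -!scalemxAl mxE. Qed.
Lemma bfZr M k x y : bf M x (k *: y) = k * bf M x y.
Proof. by rewrite /bf -scalemxAr mxE. Qed.
Lemma bfNl M x y : bf M (- x) y = - bf M x y.
Proof. by rewrite -scaleN1r bfZl mulN1r. Qed.
Lemma bfNr M x y : bf M x (- y) = - bf M x y.
Proof. by rewrite -scaleN1r bfZr mulN1r. Qed.
Lemma bfC M x y : M^T = M -> bf M x y = bf M y x.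
Proof.
move=> HM; rewrite /bf -[in LHS](trmxK (x^T *m M *m y)) mxE.
by rewrite !trmx_mul trmxK HM mulmxA.
Qed.

Lemma bf_comb M x y t : M^T = M ->
  bf M ((1 - t) *: x + t *: y) ((1 - t) *: x + t *: y) =
  (1 - t) * bf M x x + t * bf M y y - t * (1 - t) * bf M (x - y) (x - y).
Proof.
move=> HM.
rewrite !(bfDl, bfDr, bfZl, bfZr, bfNl, bfNr) (bfC x y HM).
ring.
Qed.

Lemma dotvE x y : dotv x y = bf 1%:M x y.
Proof.
rewrite /bf mulmx1 /dotv mxE; apply: eq_bigr => i _; by rewrite mxE.
Qed.

Lemma dotv_ge0 x : 0 <= dotv x x.
Proof. by rewrite /dotv; apply: sumr_ge0 => i _; rewrite -expr2 sqr_ge0. Qed.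

Lemma enorm2 x : enorm x ^+ 2 = dotv x x.
Proof. by rewrite /enorm sqr_sqrtr // dotv_ge0. Qed.

Lemma dotv_eq0 x : dotv x x = 0 -> x = 0.
Proof.
move=> H; apply/matrixP => i j; rewrite ord1 mxE.
have H2 := psumr_eq0P (fun i _ => sqr_ge0 (x i 0)) H.
have := H2 i isT.
by move=> /eqP; rewrite mulf_eq0 orbb => /eqP.
Qed.

Lemma dotv_comb x y t :
  dotv ((1 - t) *: x + t *: y) ((1 - t) *: x + t *: y) =
  (1 - t) * dotv x x + t * dotv y y - t * (1 - t) * dotv (x - y) (x - y).
Proof. by rewrite !dotvE bf_comb // tr_scalar_mx. Qed.

End Alg.

End MA.
Import MA.

Module MB.
Local Open Scope ring_scope.
Local Open Scope classical_set_scope.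

Section Top.
Variables (R : realType).

Lemma cont_sum (T : topologicalType) (I : Type) (r : seq I) (F : I -> T -> R) :
  (forall i, continuous (F i)) -> continuous (fun x => \sum_(i <- r) F i x).
Proof.
move=> HF; elim: r => [|a r IH].
  under eq_fun do rewrite big_nil. exact: cst_continuous.
under eq_fun do rewrite big_cons.
move=> x; apply: continuousD; [exact: HF | exact: IH].
Qed.

Variable n : nat.

Lemma bfE (M : 'M[R]_n) x y : bf M x y = \sum_j (\sum_i x i 0 * M i j) * y j 0.
Proof.
rewrite /bf mxE; apply: eq_bigr => j _; rewrite mxE; congr (_ * _).
by apply: eq_bigr => i _; rewrite mxE.
Qed.

Lemma bf_cont (M : 'M[R]_n) : continuous (fun x : 'cV[R]_n => bf M x x).
Proof.
under eq_fun do rewrite bfE.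
apply: cont_sum => j.
have Hc : continuous (fun x : 'cV[R]_n => \sum_i x i 0 * M i j).
  apply: cont_sum => i y.
  apply: continuousM; [exact: coord_continuous | exact: cst_continuous].
move=> x; apply: continuousM; [exact: Hc | exact: coord_continuous].
Qed.

Lemma enorm_cont : continuous (@enorm R n).
Proof.
have Hd : continuous (fun x : 'cV[R]_n => dotv x x).
  have -> : (fun x : 'cV[R]_n => dotv x x) = (fun x => bf 1%:M x x).
    by apply/funext => y; rewrite dotvE.
  exact: bf_cont.
move=> x; exact: (continuous_comp (Hd x) (@sqrt_continuous R _)).
Qed.

Lemma trmx_cont : continuous (fun v : 'rV[R]_n => v^T).
Proof.
move=> v A /= /(nbhs_ballP (v^T)) [e e0 eA].
apply/nbhs_ballP; exists e => //= w [_ vw]; apply: eA; split => // i j.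
by rewrite !mxE; exact: vw.
Qed.

Lemma coord_le_enorm (x : 'cV[R]_n) i : `|x i 0| <= enorm x.
Proof.
rewrite /enorm -sqrtr_sqr; apply: ler_wsqrtr.
rewrite /dotv (bigD1 i) //= -expr2 lerDl.
by apply: sumr_ge0 => k _; rewrite -expr2 sqr_ge0.
Qed.

Lemma cV_compact (A : set 'cV[R]_n) r :
  closed A -> (forall x, A x -> enorm x <= r) -> compact A.
Proof.
move=> cA bA.
have -> : A = (fun v : 'rV[R]_n => v^T) @` ((fun v : 'rV[R]_n => v^T) @^-1` A).
  apply/seteqP; split => x.
    by move=> Ax; exists x^T; rewrite /= trmxK.
  by move=> [v Av <-].
apply: continuous_compact.
  by apply: continuous_subspaceT => v; exact: trmx_cont.
apply: bounded_closed_compact.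
  exists r; split; first by rewrite num_real.
  move=> M rM v /= Av.
  apply: le_trans (ltW rM).
  change (mx_norm v <= r); rewrite mx_normrE.
  apply: bigmax_le.
    exact: le_trans (sqrtr_ge0 _) (bA _ Av).
  move=> [a b] _ /=; rewrite ord1.
  by apply: le_trans (bA _ Av); have := coord_le_enorm (v^T) b; rewrite mxE.
by apply: preimage_closed => // v _; exact: trmx_cont.
Qed.
End Top.

End MB.
Import MB.

Module MC.
Local Open Scope ring_scope.
Local Open Scope classical_set_scope.

Section Ray.
Variables (R : realType) (n : nat).

Lemma quad_lin0 (a b : R) : (forall t, 0 <= a * t ^+ 2 + b * t) -> b = 0.
Proof.
move=> H.
pose d := `|a| + 1.
have d0 : 0 < d by rewrite /d ltr_pwDr // normr_ge0.
pose u := b / (2 * d).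
have bu : b = 2 * d * u by rewrite /u; field; rewrite gt_eqF.
have Ht := H (- u).
rewrite bu in Ht.
have ad : a <= `|a| := ler_norm a.
have : u = 0.
  apply/eqP; rewrite -sqrf_eq0 eq_le sqr_ge0 andbT.
  rewrite /d in Ht d0; nra.
by move=> u0; rewrite bu u0 mulr0.
Qed.

Lemma bf0 (M : 'M[R]_n) : bf M 0 0 = 0.
Proof. by rewrite /bf trmx0 !mul0mx mxE. Qed.

Lemma enorm_ge0 (x : 'cV[R]_n) : 0 <= enorm x.
Proof. exact: sqrtr_ge0. Qed.

Lemma dotvZ k (x : 'cV[R]_n) : dotv (k *: x) (k *: x) = k ^+ 2 * dotv x x.
Proof. by rewrite !dotvE bfZl bfZr mulrA expr2. Qed.

Lemma sphere_compact : compact [set x : 'cV[R]_n | enorm x = 1].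
Proof.
have Hc : closed [set x : 'cV[R]_n | enorm x = 1].
  apply: (@preimage_closed _ _ (@enorm R n) [set y | y = 1]); last exact: closed_eq.
  by move=> x _; exact: enorm_cont.
have Hb : forall x, [set x : 'cV[R]_n | enorm x = 1] x -> enorm x <= 1.
  by move=> x /= ->.
exact: (@cV_compact R n _ 1 Hc Hb).
Qed.

Lemma rayleigh (M : 'M[R]_n) : sym_pos_def M ->
  forall v, sigma_min M * dotv v v <= bf M v v.
Proof.
move=> [HM Hpd] v.
have [->|v0] := eqVneq v 0.
  by rewrite dotvE !bf0 mulr0.
set S := [set x : 'cV[R]_n | enorm x = 1].
have ev0 : 0 < enorm v.
  rewrite lt_neqAle enorm_ge0 andbT; apply/eqP => e0.
  have : dotv v v = 0 by rewrite -enorm2 -e0 expr2 mulr0.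
  by move/dotv_eq0; apply/eqP.
have Sv : S ((enorm v)^-1 *: v).
  rewrite /S /= /enorm dotvZ sqrtrM ?sqr_ge0 // sqrtr_sqr -/(enorm v).
  by rewrite ger0_norm ?invr_ge0 ?enorm_ge0 // mulVf // gt_eqF.
have [x0 Sx0 x0min] : exists2 c, c \in S & forall t, t \in S -> bf M c c <= bf M t t.
  apply: compact_EVT_min; [by exists ((enorm v)^-1 *: v) | exact: sphere_compact |].
  by apply: continuous_subspaceT => x; exact: bf_cont.
rewrite inE in Sx0.
set m := bf M x0 x0.
have Dx0 : dotv x0 x0 = 1 by rewrite -enorm2 Sx0 expr1n.
have gen : forall y, m * dotv y y <= bf M y y.
  move=> y; have [->|y0] := eqVneq y 0; first by rewrite dotvE !bf0 mulr0.
  have ey0 : 0 < enorm y.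
    rewrite lt_neqAle enorm_ge0 andbT; apply/eqP => e0.
    have : dotv y y = 0 by rewrite -enorm2 -e0 expr2 mulr0.
    by move/dotv_eq0; apply/eqP.
  have Sy : S ((enorm y)^-1 *: y).
    rewrite /S /= /enorm dotvZ sqrtrM ?sqr_ge0 // sqrtr_sqr -/(enorm y).
    by rewrite ger0_norm ?invr_ge0 ?enorm_ge0 // mulVf // gt_eqF.
  have := x0min _ (mem_set Sy); rewrite bfZl bfZr -/m.
  move=> H; rewrite -enorm2.
  have -> : bf M y y = ((enorm y)^-1 * ((enorm y)^-1 * bf M y y)) * enorm y ^+ 2.
    by field; rewrite gt_eqF.
  by rewrite ler_wpM2r // sqr_ge0.
pose w := M *m x0.
have bw : bf M x0 w = dotv w w.
  by rewrite dotvE /bf /w mulmx1 trmx_mul HM !mulmxA.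
have dw : dotv x0 w = m.
  by rewrite dotvE /bf /w mulmx1 /m mulmxA.
have bsym : bf M w x0 = bf M x0 w by rewrite (bfC w x0 HM).
have dsym : dotv w x0 = dotv x0 w by rewrite !dotvE (bfC w x0) // tr_scalar_mx.
have key : bf M x0 w - m * dotv x0 w = 0.
  suff : 2 * (bf M x0 w - m * dotv x0 w) = 0.
    by move/eqP; rewrite mulf_eq0 pnatr_eq0 /= => /eqP.
  apply: (@quad_lin0 (bf M w w - m * dotv w w)) => t.
  have := gen (x0 + t *: w).
  rewrite !dotvE !(bfDl, bfDr, bfZl, bfZr) -!dotvE dsym bsym -/m Dx0.
  move=> H; rewrite -subr_ge0 in H.
  by apply: le_trans H _; rewrite le_eqVlt; apply/orP; left; apply/eqP; ring.
rewrite bw dw in key.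
have m0 : 0 < m.
  apply: Hpd; apply/eqP => x00; move: Dx0; rewrite x00 dotvE bf0 => /eqP.
  by rewrite eq_sym oner_eq0.
have ew : enorm w = m.
  rewrite /enorm; move/eqP: key; rewrite subr_eq0 => /eqP ->.
  by rewrite -expr2 sqrtr_sqr gtr0_norm.
have smin : sigma_min M <= m.
  rewrite -ew /sigma_min.
  apply: ge_inf.
    exists 0 => _ [x _ <-]; exact: enorm_ge0.
  by exists x0.
apply: le_trans (gen v).
by rewrite ler_wpM2r // dotv_ge0.
Qed.
End Ray.

End MC.
Import MC.

Module MD.
Local Open Scope ring_scope.
Local Open Scope classical_set_scope.

Section Min.
Variables (R : realType) (n : nat).

Lemma enorm0 : enorm (0 : 'cV[R]_n) = 0.
Proof. by rewrite /enorm dotvE bf0 sqrtr0. Qed.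

Lemma enormZ k (x : 'cV[R]_n) : enorm (k *: x) = `|k| * enorm x.
Proof. by rewrite /enorm dotvZ sqrtrM ?sqr_ge0 // sqrtr_sqr. Qed.

Lemma ball_compact r : compact [set x : 'cV[R]_n | enorm x <= r].
Proof.
have Hc : closed [set x : 'cV[R]_n | enorm x <= r].
  apply: (@preimage_closed _ _ (@enorm R n) [set y | y <= r]); last exact: closed_le.
  by move=> x _; exact: enorm_cont.
have Hb : forall x, [set x : 'cV[R]_n | enorm x <= r] x -> enorm x <= r by [].
exact: (@cV_compact R n _ r Hc Hb).
Qed.

Lemma contB' (T : topologicalType) (f g : T -> R) :
  continuous f -> continuous g -> continuous (fun x => f x - g x).
Proof. by move=> cf cg x; exact: (continuousB (cf x) (cg x)). Qed.

Lemma contM' (T : topologicalType) (f g : T -> R) :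
  continuous f -> continuous g -> continuous (fun x => f x * g x).
Proof. by move=> cf cg x; apply: continuousM; [exact: cf | exact: cg]. Qed.

Lemma cont_cst (T : topologicalType) (a : R) : continuous (fun _ : T => a).
Proof. exact: cst_continuous. Qed.

Arguments contB' {T f g}. Arguments contM' {T f g}. Arguments cont_cst {T}.

Lemma exists_min (f : 'cV[R]_n -> R) mu : 0 < mu -> continuous f ->
  convex_fun (fun x => f x - mu / 2 * enorm x ^+ 2) ->
  exists x, forall y, f x <= f y.
Proof.
move=> mu0 fc hc.
set h := fun x => f x - mu / 2 * enorm x ^+ 2.
have hcont : continuous h.
  have e2 : continuous (fun x : 'cV[R]_n => enorm x ^+ 2).
    have := contM' (@enorm_cont R n) (@enorm_cont R n).
    by under eq_fun do rewrite -expr2.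
  have e3 : continuous (fun x : 'cV[R]_n => mu / 2 * enorm x ^+ 2).
    exact: contM' (cont_cst _) e2.
  exact: contB' fc e3.
have [x1 Bx1 x1min] : exists2 c, c \in [set x : 'cV[R]_n | enorm x <= 1] &
    forall t, t \in [set x : 'cV[R]_n | enorm x <= 1] -> h c <= h t.
  apply: compact_EVT_min; [by exists 0; rewrite /= enorm0 | exact: ball_compact |].
  by apply: continuous_subspaceT.
set K := h 0 - h x1.
have K0 : 0 <= K by rewrite subr_ge0 x1min // inE /= enorm0.
have lb : forall x, 1 <= enorm x -> h 0 - K * enorm x <= h x.
  move=> x ex1.
  have ex0 : 0 < enorm x by apply: lt_le_trans ex1.
  set t := (enorm x)^-1.
  have t0 : 0 <= t by rewrite invr_ge0 ltW.
  have t1 : t <= 1 by rewrite invr_le1 // ?unitfE ?gt_eqF.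
  have := hc 0 x t; rewrite t0 t1 => /(_ isT).
  rewrite scaler0 add0r.
  have Bt : enorm (t *: x) <= 1.
    by rewrite enormZ ger0_norm // mulVf // gt_eqF.
  have := x1min (t *: x); rewrite inE => /(_ Bt) H1 H2.
  have H3 : h x1 <= (1 - t) * h 0 + t * h x := le_trans H1 H2.
  have E : enorm x * t = 1 by rewrite /t mulfV // gt_eqF.
  have H4 := ler_wpM2l (ltW ex0) H3.
  have Eq : enorm x * ((1 - t) * h 0 + t * h x) =
    enorm x * h 0 - (enorm x * t) * h 0 + (enorm x * t) * h x by ring.
  rewrite Eq E !mul1r in H4.
  rewrite /K; lra.
set r := 1 + 2 * K / mu.
have r1 : 1 <= r.
  rewrite /r lerDl; apply: divr_ge0; last exact: ltW.
  by apply: mulr_ge0.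
have [xs Bxs xsmin] : exists2 c, c \in [set x : 'cV[R]_n | enorm x <= r] &
    forall t, t \in [set x : 'cV[R]_n | enorm x <= r] -> f c <= f t.
  apply: compact_EVT_min; [by exists 0; rewrite /= enorm0 (le_trans _ r1) | exact: ball_compact |].
  by apply: continuous_subspaceT.
exists xs => y.
have [ey|ey] := leP (enorm y) r; first by apply: xsmin; rewrite inE.
have f0 : f xs <= f 0 by apply: xsmin; rewrite inE /= enorm0 (le_trans _ r1).
have h0 : h 0 = f 0 by rewrite /h enorm0 expr0n /= mulr0 subr0.
apply: le_trans f0 _.
have := lb y (le_trans r1 (ltW ey)).
rewrite h0 /h => Hl.
have hr : mu * r = mu + 2 * K by rewrite /r mulrDr mulr1 mulrCA mulfV ?gt_eqF // mulr1.
have ey0 : 0 < enorm y := lt_le_trans ltr01 (le_trans r1 (ltW ey)).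
have H1 : mu * r < mu * enorm y by rewrite ltr_pM2l.
have H2 : 0 < enorm y * (mu * enorm y - 2 * K).
  by apply: mulr_gt0 => //; lra.
rewrite expr2 in Hl; lra.
Qed.

Lemma uniq_min (f : 'cV[R]_n -> R) mu : 0 < mu ->
  convex_fun (fun x => f x - mu / 2 * enorm x ^+ 2) ->
  forall x1 x2, (forall y, f x1 <= f y) -> (forall y, f x2 <= f y) -> x1 = x2.
Proof.
move=> mu0 hc x1 x2 H1 H2.
have h12 : (0 <= (1/2 : R) <= 1) by apply/andP; split; lra.
have := hc x1 x2 (1/2) h12; rewrite !enorm2 dotv_comb => H.
have A1 := H1 ((1 - 1/2) *: x1 + (1/2) *: x2).
have A2 := H2 ((1 - 1/2) *: x1 + (1/2) *: x2).
have D0 := dotv_ge0 (x1 - x2).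
have : dotv (x1 - x2) (x1 - x2) = 0 by nra.
by move/dotv_eq0/eqP; rewrite subr_eq0 => /eqP.
Qed.
End Min.

End MD.
Import MD.
Local Open Scope ring_scope.

Lemma subc_cont (R : realType) n (c : 'cV[R]_n) : continuous (fun z : 'cV[R]_n => z - c).
Proof.
move=> v A /= /(nbhs_ballP (v - c)) [e e0 eA].
apply/nbhs_ballP; exists e => //= w [_ vw]; apply: eA; split => // i j.
have := vw i j; rewrite !mxE /ball /=.
by have -> : v i j - c i j - (w i j - c i j) = v i j - w i j by ring.
Qed.

Lemma contD' (R : realType) (T : topologicalType) (f g : T -> R) :
  continuous f -> continuous g -> continuous (fun x => f x + g x).
Proof. by move=> cf cg x; exact: (continuousD (cf x) (cg x)). Qed.
Arguments contD' {R T f g}.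

Theorem lemma2 (R : realType) (n : nat) (U : Type) (M : 'M[R]_n)
  (delta_i delta_im1 : R) (theta_im1 theta_im2 : 'cV[R]_n) (u : U)
  (Pbar : 'cV[R]_n -> U -> R) (L : R) :
  sym_pos_def M -> 0 < delta_i -> 0 < delta_im1 -> 0 < L ->
  curvature_bounded L (fun th => Pbar th u) ->
  delta_i < Num.sqrt (sigma_min M / L) ->
  let Ebar := fun th : 'cV[R]_n =>
    1 / (2 * delta_i ^+ 2) *
      mnorm2 M (th - (1 + delta_i / delta_im1) *: theta_im1
                   + (delta_i / delta_im1) *: theta_im2)
    + Pbar th u in
  strongly_convex Ebar /\
  exists! th : 'cV[R]_n, forall th' : 'cV[R]_n, Ebar th <= Ebar th'.
Proof.
move=> HSPD d0 d10 L0 [Hwc [Hdiff _]] Hd Ebar.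
set s := sigma_min M.
have q0 : 0 < Num.sqrt (s / L) := lt_trans d0 Hd.
have sL0 : 0 < s / L by rewrite -sqrtr_gt0.
have sL : delta_i ^+ 2 < s / L.
  have := sqr_sqrtr (ltW sL0); nra.
have d20 : 0 < delta_i ^+ 2 by rewrite exprn_gt0.
set k := 1 / (2 * delta_i ^+ 2).
set mu := s / delta_i ^+ 2 - L.
have mu0 : 0 < mu.
  rewrite /mu subr_gt0 ltr_pdivlMr //.
  by move: sL; rewrite ltr_pdivlMr // mulrC.
have ks : k * s = (L + mu) / 2.
  by rewrite /k /mu; field; rewrite gt_eqF.
set c := (1 + delta_i / delta_im1) *: theta_im1 - (delta_i / delta_im1) *: theta_im2.
have EbarE : forall z, Ebar z = k * bf M (z - c) (z - c) + Pbar z u.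
  move=> z; rewrite /Ebar /mnorm2 -/k.
  have -> : z - (1 + delta_i / delta_im1) *: theta_im1 + (delta_i / delta_im1) *: theta_im2
    = z - c by apply/matrixP => i j; rewrite /c !mxE; ring.
  by [].
have cvx : convex_fun (fun x => Ebar x - mu / 2 * enorm x ^+ 2).
  move=> x y t /andP[t0 t1].
  have Hg := Hwc x y t (introT andP (conj t0 t1)).
  rewrite !enorm2 dotv_comb in Hg *.
  rewrite !EbarE.
  have hc : (1 - t) *: x + t *: y - c = (1 - t) *: (x - c) + t *: (y - c).
    by apply/matrixP => i j; rewrite !mxE; ring.
  have hd : (x - c) - (y - c) = x - y by apply/matrixP => i j; rewrite !mxE; ring.
  rewrite hc bf_comb ?hd; last by case: HSPD.
  have Rl := @rayleigh R n M HSPD (x - y).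
  have tt : 0 <= t * (1 - t) by apply: mulr_ge0; lra.
  have k0 : 0 < k by rewrite /k divr_gt0 // mulr_gt0.
  have Pos : 0 <= t * (1 - t) * (k * bf M (x - y) (x - y) - (L + mu) / 2 * dotv (x - y) (x - y)).
    apply: mulr_ge0 => //; rewrite subr_ge0 -ks -mulrA ler_pM2l //.
  lra.
have Pc : continuous (fun z => Pbar z u).
  by move=> z; exact: differentiable_continuous (Hdiff z).
have sc : continuous (fun z : 'cV[R]_n => z - c).
  exact: subc_cont.
have qc : continuous (fun z : 'cV[R]_n => bf M (z - c) (z - c)).
  by move=> z; exact: (continuous_comp (sc z) (@bf_cont R n M (z - c))).
have Ec : continuous Ebar.
  have -> : Ebar = (fun z => k * bf M (z - c) (z - c) + Pbar z u).
    by apply/funext => z; rewrite EbarE.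
  have h1 := @contM' R _ _ _ (@cont_cst R _ k) qc.
  have h2 := contD' h1 Pc.
  exact: h2.
split; first by exists mu; split.
have [x Hx] := @exists_min R n Ebar mu mu0 Ec cvx.
exists x; split => // x' Hx'.
exact: (@uniq_min R n Ebar mu mu0 cvx x x' Hx Hx').
Qed.
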